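(* Let $L$ be a nonarchimedean field extension of a perfectoid field $K$ such that the residue field $\widetilde L$ has positive transcendence degree over $\widetilde K$, and assume $\widetilde K$ is uncountable. Then $L$ is not a quotient field of a perfectoid Tate algebra $K\langle x_1^{1/p^\infty},\dots,x_n^{1/p^\infty}\rangle$ in any number $n$ of variables (i.e., there is no continuous surjection from such an algebra onto $L$).
   Context: Tildes denote residue fields of nonarchimedean fields. *)

(* Defs.v *)
From HB Require Import structures.
From mathcomp Require Import all_boot all_order all_algebra.
From mathcomp Require Import reals.
Set Implicit Arguments. Unset Strict Implicit. Unset Printing Implicit Defensive.
Import Order.TTheory GRing.Theory Num.Theory.
Local Open Scope ring_scope.

Section Defs.
Variable R : realType.

Definition nonarch_abs (K : fieldType) (v : K -> R) : Prop :=
  [/\ (forall x, 0 <= v x), (forall x, v x = 0 <-> x = 0),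
      (forall x y, v (x * y) = v x * v y) &
      (forall x y, v (x + y) <= Num.max (v x) (v y))].

Definition complete_abs (K : fieldType) (v : K -> R) : Prop :=
  forall u : nat -> K,
    (forall e, 0 < e -> exists N, forall m k, (N <= m)%N -> (N <= k)%N -> v (u m - u k) < e) ->
    exists l, forall e, 0 < e -> exists N, forall m, (N <= m)%N -> v (u m - l) < e.

Definition nonarch_field (K : fieldType) (v : K -> R) : Prop :=
  nonarch_abs v /\ complete_abs v.

(* Perfectoid field of residue characteristic p (Scholze): complete nonarchimedean,
   residue characteristic p (|p| < 1), non-discrete value group, and Frobenius
   x |-> x^p surjective on K°/p (i.e. |x - y^p| <= |p|). *)
Definition perfectoid (p : nat) (K : fieldType) (v : K -> R) : Prop :=
  [/\ prime p, nonarch_field v, v (p%:R) < 1,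
      (forall e, 1 < e -> exists x, 1 < v x /\ v x < e) &
      (forall x, v x <= 1 -> exists y, v y <= 1 /\ v (y ^+ p - x) <= v (p%:R))].

(* The residue field K~ = K°/K°° is countable: some sequence of integral elements
   meets every residue class. *)
Definition residue_countable (K : fieldType) (v : K -> R) : Prop :=
  exists g : nat -> K, (forall k, v (g k) <= 1) /\
    forall x, v x <= 1 -> exists k, v (x - g k) < 1.

(* t in L° has residue class transcendental over K~: for every P in K°[X] with
   nonzero reduction, the reduction of P(t) is nonzero. *)
Definition residue_transcendental (K L : fieldType) (vK : K -> R) (vL : L -> R)
    (iota : {rmorphism K -> L}) (t : L) : Prop :=
  vL t <= 1 /\
  forall P : {poly K}, (forall i, vK P`_i <= 1) -> (exists i, vK P`_i = 1) ->
    vL ((map_poly iota P).[t]) = 1.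

(* trdeg(L~/K~) > 0 : there is a nonempty algebraically independent set,
   i.e. a residue class transcendental over K~. *)
Definition residue_trdeg_pos (K L : fieldType) (vK : K -> R) (vL : L -> R)
    (iota : {rmorphism K -> L}) : Prop :=
  exists t, residue_transcendental vK vL iota t.

Definition exponent (p n : nat) (nu : {ffun 'I_n -> rat}) : Prop :=
  forall i, 0 <= nu i /\ exists k : nat, exists z : int, nu i * (p ^ k)%:R = z%:~R.

Definition tate_elt (p n : nat) (K : fieldType) (v : K -> R)
    (a : {ffun 'I_n -> rat} -> K) : Prop :=
  (forall nu, ~ exponent p nu -> a nu = 0) /\
  (forall e, 0 < e -> exists S : seq {ffun 'I_n -> rat},
      forall nu, nu \notin S -> v (a nu) < e).

Definition has_sum (X : eqType) (K : fieldType) (v : K -> R)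
    (P : X -> Prop) (f : X -> K) (s : K) : Prop :=
  forall e, 0 < e -> exists S0 : seq X, (forall x, x \in S0 -> P x) /\
    forall S : seq X, uniq S -> (forall x, x \in S -> P x) -> {subset S0 <= S} ->
      v (s - \sum_(x <- S) f x) < e.

Definition tate_prod (n : nat) (K : fieldType) (v : K -> R)
    (a b c : {ffun 'I_n -> rat} -> K) : Prop :=
  forall nu : {ffun 'I_n -> rat}, has_sum v (fun ab : {ffun 'I_n -> rat} * {ffun 'I_n -> rat} =>
                          forall i, ab.1 i + ab.2 i = nu i)
                       (fun ab => a ab.1 * b ab.2) (c nu).

Definition tate_one (n : nat) (K : fieldType) (nu : {ffun 'I_n -> rat}) : K :=
  if [forall i, nu i == 0] then 1 else 0.

Definition tate_cont_surj (p n : nat) (K L : fieldType) (vK : K -> R) (vL : L -> R)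
    (iota : {rmorphism K -> L}) (phi : ({ffun 'I_n -> rat} -> K) -> L) : Prop :=
  [/\ [/\ (forall a b, tate_elt p vK a -> tate_elt p vK b ->
         phi (fun nu => a nu + b nu) = phi a + phi b),
      (forall (c : K) a, tate_elt p vK a -> phi (fun nu => c * a nu) = iota c * phi a) &
      (forall a b c, tate_elt p vK a -> tate_elt p vK b -> tate_elt p vK c ->
         tate_prod vK a b c -> phi c = phi a * phi b)],
      phi (@tate_one n K) = 1 &
      (forall a, tate_elt p vK a -> forall e, 0 < e -> exists2 d, 0 < d &
         forall b, tate_elt p vK b -> (forall nu, vK (b nu - a nu) < d) ->
           vL (phi b - phi a) < e)] /\
      (forall l : L, exists a, tate_elt p vK a /\ phi a = l).

End Defs.

(* Main.v *)
Require Import Defs.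
From HB Require Import structures.
From mathcomp Require Import all_boot all_order all_algebra.
From mathcomp Require Import reals.
From mathcomp Require Import ring lra.
From Stdlib Require Import Classical ClassicalEpsilon FunctionalExtensionality.
Import Order.TTheory GRing.Theory Num.Theory.
Local Open Scope ring_scope.
Set Implicit Arguments. Unset Strict Implicit.

Section Basic.
Variables (R : realType) (F : fieldType) (v : F -> R).
Hypothesis hv : nonarch_abs v.

Lemma v_ge0 x : 0 <= v x. Proof. by case: hv. Qed.
Lemma vM x y : v (x * y) = v x * v y. Proof. by case: hv. Qed.
Lemma v_add x y : v (x + y) <= Num.max (v x) (v y). Proof. by case: hv. Qed.
Lemma v0 : v 0 = 0. Proof. by case: hv => _ h _ _; apply: (proj2 (h 0)). Qed.
Lemma v_eq0 x : v x = 0 -> x = 0. Proof. by case: hv => _ h _ _; apply: (proj1 (h x)). Qed.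
Lemma v1 : v 1 = 1.
Proof.
have h : v 1 = v 1 * v 1 by rewrite -vM mulr1.
have nz : v 1 <> 0 by move/v_eq0/eqP; rewrite oner_eq0.
have : v 1 * (v 1 - 1) = 0 by rewrite mulrBr mulr1 -h subrr.
move/eqP; rewrite mulf_eq0 => /orP[/eqP//|]; by rewrite subr_eq0 => /eqP.
Qed.
Lemma vN1 : v (-1) = 1.
Proof.
have h : v (-1) * v (-1) = 1 by rewrite -vM mulrNN mulr1 v1.
have := v_ge0 (-1). nra.
Qed.
Lemma vN x : v (- x) = v x. Proof. by rewrite -mulN1r vM vN1 mul1r. Qed.
Lemma vB x y : v (x - y) = v (y - x). Proof. by rewrite -vN opprB. Qed.
Lemma v_add_lt x y (e : R) : v x < e -> v y < e -> v (x + y) < e.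
Proof. move=> hx hy; apply: le_lt_trans (v_add x y) _; by rewrite gt_max hx hy. Qed.
Lemma v_add_le x y (e : R) : v x <= e -> v y <= e -> v (x + y) <= e.
Proof. move=> hx hy; apply: le_trans (v_add x y) _; by rewrite ge_max hx hy. Qed.
Lemma v_sub_le x y (e : R) : v x <= e -> v y <= e -> v (x - y) <= e.
Proof. by move=> hx hy; apply: v_add_le => //; rewrite vN. Qed.
Lemma v_sum_lt (I : Type) (r : seq I) (P : pred I) (f : I -> F) (e : R) :
  0 < e -> (forall i, P i -> v (f i) < e) -> v (\sum_(i <- r | P i) f i) < e.
Proof.
move=> e0 h; apply: (big_ind (fun x => v x < e)); last exact: h.
  by rewrite v0.
by move=> x y; apply: v_add_lt.
Qed.
Lemma v_sum_le (I : Type) (r : seq I) (P : pred I) (f : I -> F) (e : R) :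
  0 <= e -> (forall i, P i -> v (f i) <= e) -> v (\sum_(i <- r | P i) f i) <= e.
Proof.
move=> e0 h; apply: (big_ind (fun x => v x <= e)); last exact: h.
  by rewrite v0.
by move=> x y; apply: v_add_le.
Qed.
Lemma v_mul_le1 x y : v x <= 1 -> v y <= 1 -> v (x * y) <= 1.
Proof. move=> hx hy; rewrite vM; have := v_ge0 x; have := v_ge0 y; nra. Qed.
Lemma v_mul_lt1 x y : v x <= 1 -> v y < 1 -> v (x * y) < 1.
Proof. move=> hx hy; rewrite vM; have := v_ge0 x; have := v_ge0 y; nra. Qed.
Lemma v_prod1 (I : Type) (r : seq I) (P : pred I) (f : I -> F) :
  (forall i, P i -> v (f i) = 1) -> v (\prod_(i <- r | P i) f i) = 1.
Proof.
move=> h; apply: (big_ind (fun x => v x = 1)) => //; first exact: v1.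
by move=> x y hx hy; rewrite vM hx hy mulr1.
Qed.
Lemma v_prod_le1 (I : Type) (r : seq I) (P : pred I) (f : I -> F) :
  (forall i, P i -> v (f i) <= 1) -> v (\prod_(i <- r | P i) f i) <= 1.
Proof.
move=> h; apply: (big_ind (fun x => v x <= 1)) => //; first by rewrite v1.
exact: v_mul_le1.
Qed.
Lemma v_neq0 x : v x = 1 -> x != 0.
Proof. by move=> h; apply/eqP => x0; move: h; rewrite x0 v0 => /eqP; rewrite eq_sym oner_eq0. Qed.
Lemma vV x : v x = 1 -> v x^-1 = 1.
Proof.
move=> h; have nz := v_neq0 h.
by have := vM x x^-1; rewrite mulfV // v1 h mul1r => <-.
Qed.

Definition intp (P : {poly F}) := forall i, v P`_i <= 1.
Lemma intpD P Q : intp P -> intp Q -> intp (P + Q).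
Proof. by move=> hP hQ i; rewrite coefD; apply: v_add_le. Qed.
Lemma intpM P Q : intp P -> intp Q -> intp (P * Q).
Proof. move=> hP hQ i; rewrite coefM; apply: v_sum_le => // j _; exact: v_mul_le1. Qed.
Lemma intpZ c P : v c <= 1 -> intp P -> intp (c *: P).
Proof. by move=> hc hP i; rewrite coefZ; apply: v_mul_le1. Qed.
Lemma intp1 : intp 1.
Proof. move=> i; rewrite coefC; case: eqP => _; by rewrite ?v1 ?v0. Qed.
Lemma intpXc c : v c <= 1 -> intp ('X - c%:P).
Proof.
move=> hc i; rewrite coefB coefX coefC; apply: v_sub_le; case: eqP => _ //;
  by rewrite ?v1 ?v0.
Qed.
Lemma intp_prod (I : Type) (r : seq I) (P : pred I) (f : I -> {poly F}) :
  (forall i, P i -> intp (f i)) -> intp (\prod_(i <- r | P i) f i).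
Proof. move=> h; apply: (big_ind intp) => //; [exact: intp1|exact: intpM]. Qed.
Lemma intp_sum (I : Type) (r : seq I) (P : pred I) (f : I -> {poly F}) :
  (forall i, P i -> intp (f i)) -> intp (\sum_(i <- r | P i) f i).
Proof.
move=> h; apply: (big_ind intp) => //; last exact: intpD.
by move=> i; rewrite coef0 v0.
Qed.
End Basic.

Lemma exists_max (R : realType) n (f : 'I_n.+1 -> R) : exists i0, forall i, f i <= f i0.
Proof.
case: (@arg_maxP _ R _ ord0 predT f isT) => i0 _ h; exists i0 => i; exact: h.
Qed.

Section LinAlg.
Variables (R : realType) (K L : fieldType) (vK : K -> R) (vL : L -> R).
Variable iota : {rmorphism K -> L}.
Hypotheses (hK : nonarch_abs vK) (hL : nonarch_abs vL).
Hypothesis hiota : forall x, vL (iota x) = vK x.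
Variable t : L.
Hypothesis ht : residue_transcendental vK vL iota t.
Variable w : nat -> L.

Definition Approx m c := exists lam : nat -> K,
  vL ((t - iota c)^-1 - \sum_(j < m) iota (lam j) * w j) < 1.

Lemma v_exp_le1 (x : K) k : vK x <= 1 -> vK (x ^+ k) <= 1.
Proof.
move=> hx; elim: k => [|k IH]; first by rewrite expr0 (v1 hK).
by rewrite exprS; apply: v_mul_le1.
Qed.

Lemma vt c : vK c <= 1 -> vL (t - iota c) = 1.
Proof.
move=> hc; case: ht => _ h.
have := h ('X - c%:P) (intpXc hK hc).
rewrite map_polyXsubC hornerXsubC; apply.
exists 1%N; rewrite coefB coefX coefC /= subr0; exact: v1.
Qed.

Lemma no_indep m (c : 'I_m.+1 -> K) :
  (forall i, vK (c i) <= 1) -> (forall i k, i != k -> vK (c i - c k) = 1) ->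
  (forall i, Approx m (c i)) -> False.
Proof.
move=> hc hd hA.
have [lam hlam] := fin_all_exists hA.
pose A : 'M[K]_(m.+1, m) := \matrix_(i, j) lam i j.
have nf : ~~ row_free A.
  rewrite /row_free; apply/negP => /eqP h.
  by have := rank_leq_col A; rewrite h ltnn.
have : kermx A != 0 by rewrite kermx_eq0.
have [i1 hi1] : exists i1, row i1 (kermx A) != 0.
  apply/existsP; rewrite -negb_forall; apply/negP => /forallP h.
  move: nf; rewrite -kermx_eq0 => /negP; apply; apply/eqP/row_matrixP => i.
  by rewrite row0; apply/eqP/h.
move=> _.
pose mu0 := row i1 (kermx A).
have hmu0 : mu0 *m A = 0 by rewrite /mu0 -row_mul mulmx_ker row0.
have [k0 hk0] : exists k0, mu0 0 k0 != 0.
  apply/existsP; rewrite -negb_forall; apply/negP => /forallP h.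
  move: hi1 => /negP; apply; apply/eqP/matrixP => i j.
  by rewrite (ord1 i); move: (h j); rewrite /mu0 !mxE => /eqP.
have [i0 hi0] := exists_max (fun i => vK (mu0 0 i)).
have nz0 : mu0 0 i0 != 0.
  apply/eqP => h; have := hi0 k0; rewrite /= h (v0 hK) => h2.
  have : vK (mu0 0 k0) = 0 by apply/eqP; rewrite eq_le h2 (v_ge0 hK).
  by move/(v_eq0 hK)/eqP; rewrite (negbTE hk0).
pose mu i := mu0 0 i / mu0 0 i0.
have hmu i : vK (mu i) <= 1.
  rewrite /mu (vM hK).
  have p0 : 0 < vK (mu0 0 i0).
    rewrite lt_def (v_ge0 hK) andbT; apply/eqP => /(v_eq0 hK) /eqP.
    by rewrite (negbTE nz0).
  have : vK (mu0 0 i0)^-1 * vK (mu0 0 i0) = 1 by rewrite -(vM hK) mulVf // (v1 hK).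
  have := hi0 i; have := v_ge0 hK (mu0 0 i); have := v_ge0 hK (mu0 0 i0)^-1; nra.
have hmui0 : vK (mu i0) = 1 by rewrite /mu mulfV // (v1 hK).
have hsum (j : 'I_m) : \sum_i mu i * lam i j = 0.
  have : (mu0 *m A) 0 j = 0 by rewrite hmu0 mxE.
  rewrite mxE => h; rewrite /mu.
  under eq_bigr => i _ do rewrite mulrAC.
  have h2 : \sum_i mu0 0 i * lam i j = 0.
    rewrite -[RHS]h; apply: eq_bigr => i _; by rewrite [A _ _]mxE.
  by rewrite -mulr_suml h2 mul0r.
pose y i := (t - iota (c i))^-1.
have nzt i : t - iota (c i) != 0 by apply: (v_neq0 hL); apply: vt.
pose S := \sum_i iota (mu i) * y i.
have hS : vL S < 1.
  have -> : S = \sum_i iota (mu i) * (y i - \sum_(j < m) iota (lam i j) * w j).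
    under [RHS]eq_bigr => i _ do rewrite mulrBr.
    rewrite sumrB.
    have -> : \sum_i iota (mu i) * (\sum_(j < m) iota (lam i j) * w j) = 0.
      under eq_bigr => i _ do rewrite mulr_sumr.
      rewrite exchange_big /=; apply: big1 => j _.
      under eq_bigr => i _ do rewrite mulrA -rmorphM.
      by rewrite -mulr_suml -rmorph_sum hsum rmorph0 mul0r.
    by rewrite subr0.
  apply: (v_sum_lt hL) => // i _; apply: (v_mul_lt1 hL); first by rewrite hiota.
  by case: (hlam i) => /=.
pose Pt := \sum_i iota (mu i) * \prod_(k | k != i) (t - iota (c k)).
have hPt : Pt = (\prod_k (t - iota (c k))) * S.
  rewrite /S mulr_sumr; apply: eq_bigr => i _.
  rewrite [X in _ = X * _](bigD1 i) //= /y.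
  have := nzt i; set a := t - iota (c i) => na.
  by field.
have vPt : vL Pt < 1.
  rewrite hPt (vM hL) (v_prod1 hL) ?mul1r // => k _; exact: vt.
pose P : {poly K} := \sum_i mu i *: \prod_(k | k != i) ('X - (c k)%:P).
have hmap : (map_poly iota P).[t] = Pt.
  rewrite rmorph_sum horner_sum; apply: eq_bigr => i _.
  rewrite /= map_polyZ rmorph_prod hornerZ horner_prod; congr (_ * _).
  by apply: eq_bigr => k _; rewrite /= map_polyXsubC hornerXsubC.
have iP : intp vK P.
  apply: (intp_sum hK) => i _; apply: (intpZ hK) => //.
  by apply: (intp_prod hK) => k _; apply: (intpXc hK).
have [i2 hi2] : exists i, vK P`_i = 1.
  apply: NNPP => hn.
  have hall i : vK P`_i < 1.
    by rewrite lt_neqAle iP andbT; apply/eqP => e; apply: hn; exists i.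
  have e1 : P.[c i0] = mu i0 * \prod_(k | k != i0) (c i0 - c k).
    rewrite horner_sum (bigD1 i0) //= [X in _ + X]big1 ?addr0.
      rewrite hornerZ horner_prod; congr (_ * _).
      by apply: eq_bigr => k _; rewrite hornerXsubC.
    move=> i hi; rewrite hornerZ horner_prod (bigD1 i0) /=; last by rewrite eq_sym.
    by rewrite hornerXsubC subrr mul0r mulr0.
  have h1 : vK P.[c i0] = 1.
    rewrite e1 (vM hK) hmui0 mul1r; apply: (v_prod1 hK) => k hk.
    by apply: hd; rewrite eq_sym.
  have : vK P.[c i0] < 1.
    rewrite horner_coef; apply: (v_sum_lt hK) => // i _; rewrite mulrC.
    by apply: (v_mul_lt1 hK) => //; apply: v_exp_le1.
  by rewrite h1 ltxx.
case: ht => _ h; have := h P iP (ex_intro _ i2 hi2).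
by rewrite hmap => e; move: vPt; rewrite e ltxx.
Qed.

Lemma vle1_eq1 (x y : K) : vK x <= 1 -> vK y <= 1 -> ~ vK (x - y) < 1 -> vK (x - y) = 1.
Proof.
move=> hx hy hn; have := v_sub_le hK hx hy => h.
by apply/eqP; rewrite eq_le h /= leNgt; apply/negP.
Qed.

Lemma split_lt (i k : nat) : (i < k.+1)%N -> i = k \/ (i < k)%N.
Proof. by rewrite ltnS leq_eqVlt => /orP[/eqP|]; auto. Qed.

Lemma cover m : exists s : seq K, (forall x, x \in s -> vK x <= 1) /\
  forall c, vK c <= 1 -> Approx m c -> exists2 x, x \in s & vK (c - x) < 1.
Proof.
apply: NNPP => hn.
have step : forall s : seq K, (forall x, x \in s -> vK x <= 1) ->
    exists c, [/\ vK c <= 1, Approx m c & forall x, x \in s -> ~ vK (c - x) < 1].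
  move=> s hs; apply: NNPP => h2; apply: hn; exists s; split => // c hc ha.
  apply: NNPP => h3; apply: h2; exists c; split => // x hx hlt; apply: h3; by exists x.
have build : forall k, exists s : seq K, [/\ size s = k,
    (forall x, x \in s -> vK x <= 1), (forall x, x \in s -> Approx m x) &
    forall i j, (i < size s)%N -> (j < size s)%N -> i != j ->
      vK (nth 0 s i - nth 0 s j) = 1].
  elim=> [|k [s [sz h1 h2 h3]]]; first by exists [::]; split.
  have [c [hc ha hd]] := step s h1.
  exists (rcons s c); split.
  - by rewrite size_rcons sz.
  - by move=> x; rewrite mem_rcons in_cons => /orP[/eqP->|]; [|apply: h1].
  - by move=> x; rewrite mem_rcons in_cons => /orP[/eqP->|]; [|apply: h2].
  move=> i j hi hj nij; rewrite size_rcons in hi hj.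
  case: (split_lt hi) => [ei|li]; case: (split_lt hj) => [ej|lj].
  - by move: nij; rewrite ei ej eqxx.
  - rewrite !nth_rcons ei ltnn eqxx lj.
    apply: vle1_eq1 => //; [apply: h1; exact: mem_nth|].
    by apply: hd; exact: mem_nth.
  - rewrite !nth_rcons ej ltnn eqxx li.
    rewrite (vB hK); apply: vle1_eq1 => //; [apply: h1; exact: mem_nth|].
    by apply: hd; exact: mem_nth.
  - by rewrite !nth_rcons li lj; apply: h3.
have [s [sz h1 h2 h3]] := build m.+1.
apply: (@no_indep m (fun i => nth 0 s i)).
- by move=> i; apply: h1; apply: mem_nth; rewrite sz.
- by move=> i k ik; apply: h3; rewrite ?sz.
- by move=> i; apply: h2; apply: mem_nth; rewrite sz.
Qed.

End LinAlg.
Section S.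
Variables (R : realType) (K L : fieldType) (vK : K -> R) (vL : L -> R).
Variable iota : {rmorphism K -> L}.
Hypotheses (hK : nonarch_abs vK) (hL : nonarch_abs vL).
Hypothesis hiota : forall x, vL (iota x) = vK x.
Variable t : L.
Hypothesis ht : residue_transcendental vK vL iota t.
Variable w : nat -> L.
Local Notation Approx := (Approx vL iota t w).
Local Notation cover := (cover hK hL hiota ht w).
Lemma countable_of_cover : (forall c, vK c <= 1 -> exists m, Approx m c) ->
  residue_countable vK.
Proof.
move=> hc.
have hs : forall m, {s : seq K | (forall x, x \in s -> vK x <= 1) /\
  forall c, vK c <= 1 -> Approx m c -> exists2 x, x \in s & vK (c - x) < 1}.
  move=> m; apply: constructive_indefinite_description; exact: cover.
pose g k := match @unpickle ((nat * nat)%type) k with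
  | Some (m, i) => nth 0 (sval (hs m)) i | None => 0 end.
exists g; split.
  move=> k; rewrite /g; case: unpickle => [[m i]|]; last by rewrite (v0 hK).
  case: (ltnP i (size (sval (hs m)))) => hi.
    by apply: (proj1 (svalP (hs m))); apply: mem_nth.
  by rewrite nth_default // (v0 hK).
move=> x hx; have [m hm] := hc x hx.
have [y ys hy] := proj2 (svalP (hs m)) x hx hm.
exists (@pickle ((nat * nat)%type) (m, index y (sval (hs m)))).
by rewrite /g pickleK nth_index.
Qed.

End S.

Section Tate.
Variables (R : realType) (K : fieldType) (vK : K -> R) (p n : nat).
Hypothesis hK : nonarch_abs vK.
Local Notation nuT := {ffun 'I_n -> rat}.

Definition delta (nu : nuT) (mu : nuT) : K := if mu == nu then 1 else 0.
Definition restr (a : nuT -> K) (S : seq nuT) (mu : nuT) : K :=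
  if mu \in S then a mu else 0.

Lemma te_zero : tate_elt p vK (fun _ : nuT => 0).
Proof. split=> // e e0; exists [::] => nu _; by rewrite (v0 hK). Qed.

Lemma te_restr a S : tate_elt p vK a -> tate_elt p vK (restr a S).
Proof.
move=> [h1 h2]; split.
  by move=> nu hn; rewrite /restr h1 // if_same.
move=> e e0; have [S0 hS0] := h2 e e0; exists S0 => nu hnu.
rewrite /restr; case: ifP => _; [exact: hS0|by rewrite (v0 hK)].
Qed.

Lemma te_sdelta x nu : exponent p nu -> tate_elt p vK (fun mu => x * delta nu mu).
Proof.
move=> hnu; split.
  move=> mu hmu; rewrite /delta; case: eqP => [e|_]; last by rewrite mulr0.
  by move: hmu; rewrite e.
move=> e e0; exists [:: nu] => mu; rewrite inE /delta => /negbTE ->.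
by rewrite mulr0 (v0 hK).
Qed.

Lemma te_delta nu : exponent p nu -> tate_elt p vK (delta nu).
Proof.
move=> h; have := te_sdelta 1 h.
by have -> : (fun mu => 1 * delta nu mu) = delta nu by apply: functional_extensionality => mu; rewrite mul1r.
Qed.

Lemma sum_ext (V : zmodType) m m' (f : nat -> V) : (m <= m')%N ->
  (forall j, (m <= j)%N -> f j = 0) -> \sum_(j < m') f j = \sum_(j < m) f j.
Proof.
move=> hm hf; rewrite [RHS](big_ord_widen m' f hm) [RHS]big_mkcond; apply: eq_bigr => j _.
by case: ifP => // /negbT; rewrite -leqNgt => /hf ->.
Qed.

Lemma sum_single (V : zmodType) m k (x : V) : (k < m)%N ->
  \sum_(j < m) (if j == k :> nat then x else 0) = x.
Proof.
move=> hk.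
have h0 : forall j, (k.+1 <= j)%N -> (if j == k then x else 0) = 0.
  by move=> j hj; case: eqP => // e; move: hj; rewrite e ltnn.
have := @sum_ext V k.+1 m (fun j : nat => if j == k then x else 0) hk h0.
move=> /= ->.
rewrite big_ord_recr /= eqxx big1 ?add0r // => j _.
by case: eqP => // e; have := ltn_ord j; rewrite e ltnn.
Qed.

End Tate.

Section Main.
Variables (R : realType) (K L : fieldType) (vK : K -> R) (vL : L -> R) (p n : nat).
Variable iota : {rmorphism K -> L}.
Hypotheses (hK : nonarch_abs vK) (hL : nonarch_abs vL).
Local Notation nuT := {ffun 'I_n -> rat}.
Variable phi : (nuT -> K) -> L.
Hypothesis hadd : forall a b, tate_elt p vK a -> tate_elt p vK b ->
         phi (fun nu => a nu + b nu) = phi a + phi b.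
Hypothesis hscale : forall (c : K) a, tate_elt p vK a -> phi (fun nu => c * a nu) = iota c * phi a.

Definition w (j : nat) : L := match @unpickle nuT j with
  | Some nu => phi ((@delta K n nu)) | None => 0 end.

Lemma phi0 : phi (fun _ => 0) = 0.
Proof.
have := hscale 0 (te_zero p n hK).
have -> : (fun nu : nuT => (0 : K) * 0) = (fun _ => 0).
  by apply: functional_extensionality => nu; rewrite mul0r.
by rewrite rmorph0 mul0r.
Qed.

Lemma fin_span a : tate_elt p vK a -> forall S : seq nuT, uniq S ->
  exists m (lam : nat -> K), (forall j, (m <= j)%N -> lam j = 0) /\
    phi (restr a S) = \sum_(j < m) iota (lam j) * w j.
Proof.
move=> ha; elim=> [|nu S IH] /=.
  move=> _; have -> : restr a [::] = (fun _ => 0).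
    by apply: functional_extensionality => mu; rewrite /restr in_nil.
  by exists 0%N, (fun _ => 0); split => //; rewrite phi0 big_ord0.
move=> /andP[nS uS]; have [m [lam [hz he]]] := IH uS.
case: (classic (exponent p nu)) => hex; last first.
  have -> : restr a (nu :: S) = restr a S.
    apply: functional_extensionality => mu; rewrite /restr in_cons.
    case: (eqVneq mu nu) => [->|] //=.
    by rewrite (negbTE nS); apply: (proj1 ha).
  by exists m, lam.
pose k := pickle nu.
have -> : restr a (nu :: S) = (fun mu => restr a S mu + a nu * (@delta K n nu) mu).
  apply: functional_extensionality => mu; rewrite /restr /delta in_cons.
  case: (eqVneq mu nu) => [->|ne] /=.
    by rewrite (negbTE nS) mulr1 add0r.
  by rewrite mulr0 addr0.
rewrite hadd; last first.
- exact: te_sdelta.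
- exact: te_restr.
rewrite hscale; last exact: te_delta.
rewrite he.
exists (maxn m k.+1), (fun j => lam j + (if j == k then a nu else 0)); split.
  move=> j; rewrite geq_max => /andP[h1 h2]; rewrite hz //.
  by case: eqP => [e|]; [move: h2; rewrite e ltnn|rewrite addr0].
under eq_bigr => j _ do rewrite rmorphD mulrDl.
rewrite big_split /=.
have := @sum_ext L m (maxn m k.+1) (fun j => iota (lam j) * w j) (leq_maxl _ _).
move=> /= -> ; last by move=> j hj; rewrite hz // rmorph0 mul0r.
congr (_ + _).
have -> : \sum_(j < maxn m k.+1) iota (if j == k :> nat then a nu else 0) * w j
   = \sum_(j < maxn m k.+1) (if j == k :> nat then iota (a nu) * w k else 0).
  by apply: eq_bigr => j _; case: eqP => [->|]; rewrite ?rmorph0 ?mul0r.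
by rewrite sum_single ?leq_maxr // /w pickleK.
Qed.

Hypothesis hcont : forall a, tate_elt p vK a -> forall e, 0 < e -> exists2 d, 0 < d &
         forall b, tate_elt p vK b -> (forall nu, vK (b nu - a nu) < d) ->
           vL (phi b - phi a) < e.
Hypothesis hsurj : forall l : L, exists a, tate_elt p vK a /\ phi a = l.
Variable t : L.

Lemma approx_all c : exists m, Approx vL iota t w m c.
Proof.
have [a [ha hpa]] := hsurj (t - iota c)^-1.
have [d d0 hd] := hcont ha ltr01.
have [S0 hS0] := ha.2 d d0.
have [m [lam [_ he]]] := fin_span ha (undup_uniq S0).
exists m, lam; rewrite -hpa -he (vB hL); apply: hd; first exact: te_restr.
move=> nu; rewrite /restr; case: ifP => h.
  by rewrite subrr (v0 hK).
by rewrite sub0r (vN hK); apply: hS0; rewrite -mem_undup h.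
Qed.
End Main.

Unset Implicit Arguments.
Theorem corollary6p5 (R : realType) (K L : fieldType) (vK : K -> R) (vL : L -> R)
    (iota : {rmorphism K -> L}) (p : nat) :
  perfectoid p vK ->
  nonarch_field vL ->
  (forall x, vL (iota x) = vK x) ->
  residue_trdeg_pos vK vL iota ->
  ~ residue_countable vK ->
  forall n : nat, ~ exists phi : ({ffun 'I_n -> rat} -> K) -> L,
      tate_cont_surj p vK vL iota phi.
Proof.
move=> [_ [hK _] _ _ _] [hL _] hiota [t ht] hnc n [phi [[[hadd hscale _] _ hcont] hsurj]].
apply: hnc; apply: (countable_of_cover hK hL hiota ht (w := w phi)) => c _.
exact: (approx_all hK hL hadd hscale hcont hsurj).
Qed.
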